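(* Let $n$ be a positive integer. Define $z:J_n\to I_n$ by $z(A,B,C)=(A,\emptyset,BC)$, where $BC$ denotes the concatenation of $B$ followed by $C$. Then $z$ is a well-defined bijection from $J_n$ onto $I_n$.
   Context: A lattice path here is a finite (possibly empty) sequence of steps, each an up step $(1,1)$ or a down step $(1,-1)$, drawn as a polygonal line; concatenation $BC$ is the path consisting of the steps of $B$ followed by those of $C$. $T_n$ is the set of ordered triples $(A,B,C)$ of lattice paths such that for some nonnegative integers $i,j,k$ with $i+j+k=n$, $A$ has $i$ up and $i$ down steps, $B$ has $j$ up and $j$ down steps, and $C$ has $k$ up and $k$ down steps; each path in a triple is regarded as drawn starting (and hence ending) on the horizontal axis. $I_n$ is the set of $(A,B,C)\in T_n$ such that $B$ is empty and $C$ has both a point strictly above and a point strictly below the horizontal axis. $J_n$ is the set of $(A,B,C)\in T_n$ such that either (1) $B$ ends with a down step, $C$ is nonempty, and no point of $C$ is strictly above the horizontal axis, or (2) $B$ ends with an up step, $C$ is nonempty, and no point of $C$ is strictly below the horizontal axis. *)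

(* Defs.v *)
From mathcomp Require Import all_boot all_algebra.
Set Implicit Arguments. Unset Strict Implicit. Unset Printing Implicit Defensive.
Import GRing.Theory Num.Theory.
Local Open Scope ring_scope.

(* A lattice path is a finite sequence of steps: true = up step (1,1),
   false = down step (1,-1).  Concatenation is seq concatenation (++). *)
Definition path := seq bool.

Definition step (b : bool) : int := if b then 1 else -1.

Definition height (p : path) : int := \sum_(x <- p) step x.

(* the vertices of p are the endpoints of its prefixes take k p, 0 <= k <= size p;
   a point of the polygonal line is strictly above (below) the axis iff some
   vertex is (the line is piecewise linear between consecutive vertices). *)
Definition has_above (p : path) : bool :=
  has (fun k => 0 < height (take k p)) (iota 0 (size p).+1).
Definition has_below (p : path) : bool :=
  has (fun k => height (take k p) < 0) (iota 0 (size p).+1).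

Definition triple := (path * path * path)%type.

Definition semilen (p : path) (i : nat) : Prop :=
  count id p = i /\ count negb p = i.

Definition inT (n : nat) (t : triple) : Prop :=
  let: (A, B, C) := t in
  exists i j k : nat, (i + j + k)%N = n /\ semilen A i /\ semilen B j /\ semilen C k.

Definition inI (n : nat) (t : triple) : Prop :=
  let: (A, B, C) := t in
  inT n t /\ B = [::] /\ has_above C /\ has_below C.

Definition inJ (n : nat) (t : triple) : Prop :=
  let: (A, B, C) := t in
  inT n t /\
  ((exists B', B = rcons B' false) /\ C <> [::] /\ ~~ has_above C \/
   (exists B', B = rcons B' true) /\ C <> [::] /\ ~~ has_below C).

Definition z (t : triple) : triple :=
  let: (A, B, C) := t in (A, [::], B ++ C).

(* Main.v *)
Require Import Defs.
From mathcomp Require Import all_boot all_order all_algebra.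
From mathcomp Require Import zify.
Import Order.TTheory GRing.Theory Num.Theory.

Local Open Scope ring_scope.

Definition h (D : seq bool) (k : nat) : int := height (take k D).

Lemma height_cat a b : height (a ++ b) = height a + height b.
Proof. by rewrite /height big_cat. Qed.
Lemma height_cons x a : height (x :: a) = step x + height a.
Proof. by rewrite /height big_cons. Qed.
Lemma height_nil : height [::] = 0.
Proof. by rewrite /height big_nil. Qed.
Lemma height_count a : height a = (count id a)%:Z - (count negb a)%:Z.
Proof.
elim: a => [|x a IH]; first by rewrite height_nil.
rewrite height_cons IH; case: x => /=; rewrite /step; lia.
Qed.

Lemma hS D k : (k < size D)%N -> h D k.+1 = h D k + step (nth false D k).
Proof.
move=> kD; rewrite /h (take_nth false) // -cats1 height_cat.
by rewrite height_cons height_nil addr0.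
Qed.

Lemma step_pm b : step b = 1 \/ step b = -1.
Proof. by case: b; [left|right]. Qed.

Lemma hsize D : h D (size D) = height D.
Proof. by rewrite /h take_size. Qed.

Lemma has_sideP b C : reflect (exists2 k, (k <= size C)%N & (if b then 0 < h C k else h C k < 0))
  (if b then has_above C else has_below C).
Proof.
case: b; (apply: (iffP hasP) => [[k]|[k]];
  [rewrite mem_iota add0n ltnS => ? ?; by exists k
  | move=> ? ?; exists k => //; by rewrite mem_iota add0n ltnS]).
Qed.

Definition Psplit (D : seq bool) (p : nat) (b : bool) : Prop :=
 [/\ (0 < p)%N, (p < size D)%N, h D p.-1 = (if b then 1 else -1),
     h D p.+1 = (if b then -1 else 1) &
     forall k, (p <= k <= size D)%N -> if b then h D k <= 0 else 0 <= h D k].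

Lemma split_unique D p q b b' : Psplit D p b -> Psplit D q b' -> p = q.
Proof.
wlog: p q b b' / (p <= q)%N.
  move=> W H1 H2; case: (leqP p q) => pq; first exact: W H1 H2.
  by symmetry; apply: W H2 H1; apply: ltnW.
move=> pq [p0 pD hp1 hp2 hk] [q0 qD hq1 hq2 _].
rewrite leq_eqVlt in pq; case/orP: pq => [/eqP//|pq].
have h1 := hk q.-1 ltac:(apply/andP; split; lia).
have h2 := hk q.+1 ltac:(apply/andP; split; lia).
rewrite hq1 in h1; rewrite hq2 in h2.
by move: h1 h2; clear; case: b; case: b'.
Qed.

Lemma semilen_height A i : semilen A i -> height A = 0.
Proof. by move=> [c1 c2]; rewrite height_count c1 c2 subrr. Qed.

Lemma split_of (B B' C : seq bool) (b : bool) : B = rcons B' (~~ b) -> height B = 0 ->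
  C <> [::] -> ~~ (if b then has_above C else has_below C) -> Psplit (B ++ C) (size B) b.
Proof.
move=> eB hB nC nA.
have hB' : height B' = (if b then 1 else -1).
  move: hB; rewrite eB -cats1 height_cat height_cons height_nil addr0.
  by case: (b) => /=; rewrite /step; lia.
have hC : forall m, (m <= size C)%N -> ~ (if b then 0 < h C m else h C m < 0).
  by move=> m mC H; move/negP: nA; apply; apply/has_sideP; exists m.
have hD : forall k, (size B <= k)%N -> h (B ++ C) k = h C (k - size B).
  move=> k kB; rewrite /h take_cat ltnNge kB /= height_cat hB add0r //.
case: C nC nA hC hD => [//|c C'] _ nA hC hD.
split.
- by rewrite eB size_rcons.
- by rewrite size_cat /=; lia.
- by rewrite /h eB size_rcons /= -cats1 -catA take_size_cat.
- rewrite hD // subSnn /h /= take0 height_cons height_nil addr0.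
  have := hC 1%N isT; rewrite /h /= take0 height_cons height_nil addr0.
  by case: (b) => /=; case: (c).
- move=> k /andP [k1 k2]; have := hC (k - size B)%N ltac:(rewrite size_cat /= in k2; rewrite /=; lia).
  rewrite hD //; case: (b) => /=; lia.
Qed.

Lemma h0 D : h D 0 = 0.
Proof. by rewrite /h take0 height_nil. Qed.

Lemma exists_split D : height D = 0 -> has_above D -> has_below D -> exists p b, Psplit D p b.
Proof.
move=> hD /(has_sideP true) exA /(has_sideP false) exB.
have eA : exists k, (k <= size D)%N && (0 < h D k).
  by case: exA => k ? ?; exists k; apply/andP.
have eB : exists k, (k <= size D)%N && (h D k < 0).
  by case: exB => k ? ?; exists k; apply/andP.
have uA : forall k, (k <= size D)%N && (0 < h D k) -> (k <= size D)%N by move=> k /andP[].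
have uB : forall k, (k <= size D)%N && (h D k < 0) -> (k <= size D)%N by move=> k /andP[].
case: (ex_maxnP eA uA) => ka /andP [kaD hka] mA.
case: (ex_maxnP eB uB) => kb /andP [kbD hkb] mB.
have hsz := hsize D; rewrite hD in hsz.
have kaS : (ka < size D)%N.
  rewrite ltn_neqAle kaD andbT; apply/eqP => e; rewrite e hsz in hka; done.
have kbS : (kb < size D)%N.
  rewrite ltn_neqAle kbD andbT; apply/eqP => e; rewrite e hsz in hkb; done.
have nA : forall k, (ka < k <= size D)%N -> h D k <= 0.
  move=> k /andP [k1 k2]; rewrite leNgt; apply/negP => H.
  have := mA k ltac:(by rewrite k2 H); lia.
have nB : forall k, (kb < k <= size D)%N -> 0 <= h D k.
  move=> k /andP [k1 k2]; rewrite leNgt; apply/negP => H.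
  have := mB k ltac:(by rewrite k2 H); lia.
case: (ltngtP ka kb) => [ab|ba|e]; last by rewrite e in hka; lia.
- exists ka.+1, true.
  have s1 := hS _ _ kaS; have s2 := step_pm (nth false D ka).
  have n1 := nA ka.+1 ltac:(apply/andP; split; lia).
  have kS1 : (ka.+1 < size D)%N by lia.
  have s3 := hS _ _ kS1; have s4 := step_pm (nth false D ka.+1).
  have n2 := nA ka.+2 ltac:(apply/andP; split; lia).
  split => //=; try lia.
- exists kb.+1, false.
  have s1 := hS _ _ kbS; have s2 := step_pm (nth false D kb).
  have n1 := nB kb.+1 ltac:(apply/andP; split; lia).
  have kS1 : (kb.+1 < size D)%N by lia.
  have s3 := hS _ _ kS1; have s4 := step_pm (nth false D kb.+1).
  have n2 := nB kb.+2 ltac:(apply/andP; split; lia).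
  split => //=; try lia.
Qed.

Lemma Psplit_J n A D p b i m : Psplit D p b -> semilen A i -> semilen D m -> (i + m)%N = n ->
  inJ n (A, take p D, drop p D).
Proof.
move=> [p0 pD h1 h2 hk] sA [cu cd] e.
have pD' : (p.-1 < size D)%N by lia.
have s1 := hS _ _ pD'; rewrite prednK // in s1.
have s2 := hS _ _ pD.
have t1 := step_pm (nth false D p.-1); have t2 := step_pm (nth false D p).
have hp : h D p = 0 by case: (b) h1 h2 s1 s2 => /= -> ->; lia.
have ex : nth false D p.-1 = ~~ b.
  move: s1; rewrite hp h1; case: (b); case: (nth false D p.-1) => //=; rewrite /step; lia.
have eT : take p D = rcons (take p.-1 D) (~~ b) by rewrite -ex -take_nth // prednK.
have hT : height (take p D) = 0 by [].
have hdrop : forall k, h (drop p D) k = h D (p + k) by move=> k; rewrite /h takeD height_cat hT add0r.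
have cT := height_count (take p D); rewrite hT in cT.
have ccu := count_cat id (take p D) (drop p D); have ccd := count_cat negb (take p D) (drop p D).
rewrite cat_take_drop in ccu ccd.
split.
  exists i, (count id (take p D)), (count id (drop p D)); split; first lia.
  split => //; split; split => //; lia.
have nD : drop p D <> [::] by move=> E; have := size_drop p D; rewrite E /=; lia.
case: (b) ex eT hk => ex eT hk; [left|right]; (split; [by exists (take p.-1 D)|split => //]).
  apply/(has_sideP true) => -[k kk]; rewrite hdrop; have := hk (p + k)%N ltac:(rewrite size_drop in kk; apply/andP; split; lia); lia.
apply/(has_sideP false) => -[k kk]; rewrite hdrop; have := hk (p + k)%N ltac:(rewrite size_drop in kk; apply/andP; split; lia); lia.
Qed.

Lemma J_Psplit n A B C : inJ n (A, B, C) -> exists b, Psplit (B ++ C) (size B) b.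
Proof.
move=> [[i [j [k [_ [_ [sB _]]]]]] [[[B' eB] [nC nA]]|[[B' eB] [nC nA]]]].
  by exists true; apply: (@split_of _ B') => //; apply: semilen_height sB.
by exists false; apply: (@split_of _ B') => //; apply: semilen_height sB.
Qed.

Lemma Psplit_sides D p b : Psplit D p b -> has_above D /\ has_below D.
Proof.
move=> [p0 pD h1 h2 _]; split.
  apply/(has_sideP true); case: (b) h1 h2 => h1 h2.
    by exists p.-1; [lia | rewrite h1].
  by exists p.+1; [lia | rewrite h2].
apply/(has_sideP false); case: (b) h1 h2 => h1 h2.
  by exists p.+1; [lia | rewrite h2].
by exists p.-1; [lia | rewrite h1].
Qed.

Theorem lemma4 (n : nat) (hn : (0 < n)%N) :
  (forall t, inJ n t -> inI n (z t)) /\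
  (forall t1 t2, inJ n t1 -> inJ n t2 -> z t1 = z t2 -> t1 = t2) /\
  (forall u, inI n u -> exists t, inJ n t /\ z t = u).
Proof.
split; [|split].
- move=> [[A B] C] HJ /=.
  have [b Hs] := J_Psplit _ _ _ _ HJ.
  have [ha hb] := Psplit_sides _ _ _ Hs.
  split; last by [].
  case: HJ => [[i [j [k [e [sA [[b1 b2] [c1 c2]]]]]]] _].
  exists i, 0%N, (j + k)%N; split; first lia.
  split => //; split; first by [].
  by rewrite /semilen !count_cat b1 b2 c1 c2.
- move=> [[A B] C] [[A' B'] C'] H1 H2 /= [eA eD].
  have [b Hs] := J_Psplit _ _ _ _ H1; have [b' Hs'] := J_Psplit _ _ _ _ H2.
  rewrite eD in Hs.
  have es := split_unique _ _ _ _ _ Hs Hs'.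
  have := eqseq_cat C C' es; rewrite eD eqxx => /esym /andP [/eqP -> /eqP ->].
  by rewrite eA.
- move=> [[A B] C] [[i [j [k [e [sA [[b1 b2] sC]]]]]] [eB [ha hb]]].
  subst B.
  have [p [b Hs]] := exists_split _ (semilen_height _ _ sC) ha hb.
  exists (A, take p C, drop p C); split; last by rewrite /= cat_take_drop.
  apply: (Psplit_J _ _ _ _ _ _ _ Hs sA sC); simpl in b1; lia.
Qed.
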